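(* Let $G\in\mathfrak D_4$ and let $\Upsilon\subseteq G$ be a subgraph isomorphic to the Mycielski–Grötzsch graph with vertices labelled $a_j,b_j$ ($j\in\mathbb Z/5\mathbb Z$), $c$. Then at least one of $a_1,a_2,a_3$ is reliable; that is, there exists $i\in\{1,2,3\}$ such that no vertex of $G$ is adjacent to all three of $a_{i-1},a_{i+1},b_i$.
   Context: $\mathfrak D_4$ is the class of (finite) maximal triangle-free graphs satisfying property $\mathscr{D}_4$ (for every $m\in\{1,2,3,4\}$ and every sequence $x_1,\dots,x_{3m}$ of not necessarily distinct vertices there is a vertex $y$ with $|\{i: x_iy\in E(G)\}|\ge m+1$). Maximal triangle-free: no triangle, and adding any new edge creates a triangle. Mycielski–Grötzsch graph: vertices $a_j,b_j$ ($j\in\mathbb Z/5\mathbb Z$), $c$; edges all pairs $a_jc$, $a_jb_{j\pm2}$, $b_jb_{j+2}$. *)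

(* Defs.v *)
From mathcomp Require Import all_boot all_order all_algebra.
Set Implicit Arguments. Unset Strict Implicit. Unset Printing Implicit Defensive.

Definition simple_graph (T : finType) (e : rel T) : Prop :=
  symmetric e /\ irreflexive e.

Definition triangle_free (T : finType) (e : rel T) : Prop :=
  forall x y z : T, e x y -> e y z -> e x z -> False.

(* triangle-free, and adding any new edge xy (x <> y, xy not an edge)
   creates a triangle, i.e. x and y have a common neighbour *)
Definition maximal_triangle_free (T : finType) (e : rel T) : Prop :=
  triangle_free e /\
  forall x y : T, x != y -> ~~ e x y -> exists z : T, e x z && e z y.

Definition property_D4 (T : finType) (e : rel T) : Prop :=
  forall m : nat, 1 <= m <= 4 ->
  forall x : 'I_(3 * m) -> T,
  exists y : T, m < #|[set i : 'I_(3 * m) | e (x i) y]|.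

Definition in_frakD4 (T : finType) (e : rel T) : Prop :=
  simple_graph e /\ maximal_triangle_free e /\ property_D4 e.

(* Upsilon: an (not necessarily induced) subgraph of G isomorphic to the
   Mycielski-Groetzsch graph, given by the images of a_j, b_j (j in Z/5Z)
   and c: these 11 vertices are pairwise distinct and the edges a_j c,
   a_j b_{j+-2}, b_j b_{j+2} are edges of G. *)
Definition MG_subgraph (T : finType) (e : rel T)
  (a b : 'Z_5 -> T) (c : T) : Prop :=
  [/\ injective a, injective b,
      (forall i j, a i != b j),
      (forall j, c != a j /\ c != b j) &
      forall j : 'Z_5,
        [/\ e (a j) c, e (a j) (b (j + 2)%R), e (a j) (b (j - 2)%R)
          & e (b j) (b (j + 2)%R)]].

Definition reliable (T : finType) (e : rel T) (a b : 'Z_5 -> T) (i : 'Z_5) : Prop :=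
  ~ exists v : T, [&& e v (a (i - 1)%R), e v (a (i + 1)%R) & e v (b i)].

(* Main.v *)
Require Import Defs.
From mathcomp Require Import all_boot all_order all_algebra.

Lemma card_count (T : finType) (d : T) (s : seq T) (P : pred T) n :
  n = size s -> #|[set i : 'I_n | P (nth d s i)]| = count P s.
Proof.
move=> ->.
rewrite cardsE cardE /enum_mem size_filter -enumT.
rewrite -(count_map val (fun i => P (nth d s i))) val_enum_ord.
by rewrite -count_map -/(mkseq _ _) mkseq_nth.
Qed.

Lemma nb (T : finType) (e : rel T) : triangle_free e ->
  forall u w z, e u w -> ~~ (e u z && e w z).
Proof. move=> tf u w z euw; apply/negP => /andP [euz ewz]. exact: (tf u w z euw ewz euz). Qed.

Lemma D4use (T : finType) (e : rel T) : property_D4 e ->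
  forall m, 1 <= m <= 4 -> forall s : seq T, size s = 3 * m ->
  exists y, m < count (fun u => e u y) s.
Proof.
move=> D m hm [|d s] hs; first by move: hm hs; case: m => [|m] //= _; rewrite mulnS.
have [y Hy] := D m hm (fun i => nth d (d :: s) i).
by exists y; rewrite -(@card_count _ d _ (fun u => e u y) _ (esym hs)).
Qed.

Fixpoint allb (n : nat) (f : seq bool -> bool) : bool :=
  if n is n'.+1 then allb n' (fun s => f (true :: s)) && allb n' (fun s => f (false :: s))
  else f [::].
Lemma allbP n f : allb n f -> forall s, size s = n -> f s.
Proof.
elim: n f => [|n IH] f /=; first by move=> H [|//].
move=> /andP [H1 H2] [|x s] //= [hs].
by case: x; [apply: (IH _ H1) | apply: (IH _ H2)].
Qed.
Lemma taut0 : forall p0 p1 p2 p3 p4 p5 p6 p7 p8 p9 p10 p11 : bool, ~~ (p0 && p6) ==> ~~ (p0 && p7) ==> ~~ (p0 && p9) ==> ~~ (p0 && p11) ==> ~~ (p1 && p7) ==> ~~ (p1 && p8) ==> ~~ (p1 && p9) ==> ~~ (p1 && p10) ==> ~~ (p2 && p4) ==> ~~ (p2 && p8) ==> ~~ (p2 && p9) ==> ~~ (p2 && p11) ==> ~~ (p3 && p4) ==> ~~ (p3 && p5) ==> ~~ (p3 && p9) ==> ~~ (p3 && p10) ==> ~~ (p4 && p6) ==> ~~ (p4 && p7) ==> ~~ (p5 && p7) ==> ~~ (p5 && p8) ==> ~~ (p6 && p8) ==> ~~ (p6 && p10) ==> ~~ (p10 && p11) ==> (4 < count id [:: p0; p1;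 p2; p3; p4; p5; p6; p7; p8; p9; p10; p11]) ==> false.
Proof.
move=> p0 p1 p2 p3 p4 p5 p6 p7 p8 p9 p10 p11.
have := @allbP 12 (fun s => if s is [:: p0; p1; p2; p3; p4; p5; p6; p7; p8; p9; p10; p11] then ~~ (p0 && p6) ==> ~~ (p0 && p7) ==> ~~ (p0 && p9) ==> ~~ (p0 && p11) ==> ~~ (p1 && p7) ==> ~~ (p1 && p8) ==> ~~ (p1 && p9) ==> ~~ (p1 && p10) ==> ~~ (p2 && p4) ==> ~~ (p2 && p8) ==> ~~ (p2 && p9) ==> ~~ (p2 && p11) ==> ~~ (p3 && p4) ==> ~~ (p3 && p5) ==> ~~ (p3 && p9) ==> ~~ (p3 && p10) ==> ~~ (p4 && p6) ==> ~~ (p4 && p7) ==> ~~ (p5 && p7) ==> ~~ (p5 && p8) ==> ~~ (p6 && p8) ==> ~~ (p6 && p10) ==> ~~ (p10 && p11) ==> (4 < count id [:: p0; p1; p2; p3; p4; p5; p6; p7; p8; p9; p10; p11]) ==> false else true) (erefl true) [:: p0; p1; p2; p3; p4; p5; p6; p7; p8; p9; p10; p11] erefl.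
by [].
Qed.

Lemma taut1 : forall p0 p1 p2 p3 p4 p5 p6 p7 p8 p9 p10 p11 : bool, ~~ (p0 && p6) ==> ~~ (p0 && p7) ==> ~~ (p0 && p9) ==> ~~ (p0 && p11) ==> ~~ (p1 && p7) ==> ~~ (p1 && p8) ==> ~~ (p1 && p9) ==> ~~ (p1 && p10) ==> ~~ (p2 && p4) ==> ~~ (p2 && p8) ==> ~~ (p2 && p9) ==> ~~ (p2 && p11) ==> ~~ (p3 && p4) ==> ~~ (p3 && p5) ==> ~~ (p3 && p9) ==> ~~ (p3 && p10) ==> ~~ (p4 && p6) ==> ~~ (p4 && p7) ==> ~~ (p5 && p7) ==> ~~ (p5 && p8) ==> ~~ (p5 && p11) ==> ~~ (p6 && p8) ==> ~~ (p6 && p10) ==> ~~ (p10 && p11) ==> (4 < count id [:: p0; p1; p2; p3; p4; p5; p6; p7; p8; p9; p10; p11]) ==> false.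
Proof.
move=> p0 p1 p2 p3 p4 p5 p6 p7 p8 p9 p10 p11.
have := @allbP 12 (fun s => if s is [:: p0; p1; p2; p3; p4; p5; p6; p7; p8; p9; p10; p11] then ~~ (p0 && p6) ==> ~~ (p0 && p7) ==> ~~ (p0 && p9) ==> ~~ (p0 && p11) ==> ~~ (p1 && p7) ==> ~~ (p1 && p8) ==> ~~ (p1 && p9) ==> ~~ (p1 && p10) ==> ~~ (p2 && p4) ==> ~~ (p2 && p8) ==> ~~ (p2 && p9) ==> ~~ (p2 && p11) ==> ~~ (p3 && p4) ==> ~~ (p3 && p5) ==> ~~ (p3 && p9) ==> ~~ (p3 && p10) ==> ~~ (p4 && p6) ==> ~~ (p4 && p7) ==> ~~ (p5 && p7) ==> ~~ (p5 && p8) ==> ~~ (p5 && p11) ==> ~~ (p6 && p8) ==> ~~ (p6 && p10) ==> ~~ (p10 && p11) ==> (4 < count id [:: p0; p1; p2; p3; p4; p5; p6; p7; p8; p9; p10; p11]) ==> false else true) (erefl true) [:: p0; p1; p2; p3; p4; p5; p6; p7; p8; p9; p10; p11] erefl.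
by [].
Qed.

Lemma taut2 : forall p0 p1 p2 p3 p4 p5 p6 p7 p8 p9 p10 p11 : bool, ~~ (p0 && p5) ==> ~~ (p0 && p6) ==> ~~ (p0 && p8) ==> ~~ (p0 && p11) ==> ~~ (p1 && p6) ==> ~~ (p1 && p7) ==> ~~ (p1 && p8) ==> ~~ (p1 && p9) ==> ~~ (p2 && p7) ==> ~~ (p2 && p8) ==> ~~ (p2 && p10) ==> ~~ (p3 && p4) ==> ~~ (p3 && p5) ==> ~~ (p3 && p8) ==> ~~ (p3 && p10) ==> ~~ (p4 && p6) ==> ~~ (p4 && p7) ==> ~~ (p4 && p11) ==> ~~ (p5 && p7) ==> ~~ (p5 && p9) ==> ~~ (p6 && p10) ==> ~~ (p9 && p11) ==> ~~ (p10 && p11) ==> (4 < count id [:: p0; p1; p2; p3; p4; p5; p6; p7; p8; p9; p10; p11]) ==> false.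
Proof.
move=> p0 p1 p2 p3 p4 p5 p6 p7 p8 p9 p10 p11.
have := @allbP 12 (fun s => if s is [:: p0; p1; p2; p3; p4; p5; p6; p7; p8; p9; p10; p11] then ~~ (p0 && p5) ==> ~~ (p0 && p6) ==> ~~ (p0 && p8) ==> ~~ (p0 && p11) ==> ~~ (p1 && p6) ==> ~~ (p1 && p7) ==> ~~ (p1 && p8) ==> ~~ (p1 && p9) ==> ~~ (p2 && p7) ==> ~~ (p2 && p8) ==> ~~ (p2 && p10) ==> ~~ (p3 && p4) ==> ~~ (p3 && p5) ==> ~~ (p3 && p8) ==> ~~ (p3 && p10) ==> ~~ (p4 && p6) ==> ~~ (p4 && p7) ==> ~~ (p4 && p11) ==> ~~ (p5 && p7) ==> ~~ (p5 && p9) ==> ~~ (p6 && p10) ==> ~~ (p9 && p11) ==> ~~ (p10 && p11) ==> (4 < count id [:: p0; p1; p2; p3; p4; p5; p6; p7; p8; p9; p10; p11]) ==> false else true) (erefl true) [:: p0; p1; p2; p3; p4; p5; p6; p7; p8; p9; p10; p11] erefl.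
by [].
Qed.

Lemma taut3 : forall p0 p1 p2 p3 p4 p5 p6 p7 p8 p9 p10 p11 : bool, ~~ (p0 && p6) ==> ~~ (p0 && p7) ==> ~~ (p0 && p8) ==> ~~ (p0 && p9) ==> ~~ (p1 && p4) ==> ~~ (p1 && p8) ==> ~~ (p1 && p9) ==> ~~ (p1 && p11) ==> ~~ (p2 && p4) ==> ~~ (p2 && p5) ==> ~~ (p2 && p8) ==> ~~ (p2 && p10) ==> ~~ (p3 && p5) ==> ~~ (p3 && p6) ==> ~~ (p3 && p8) ==> ~~ (p3 && p11) ==> ~~ (p4 && p6) ==> ~~ (p4 && p7) ==> ~~ (p5 && p7) ==> ~~ (p5 && p9) ==> ~~ (p6 && p10) ==> ~~ (p7 && p11) ==> ~~ (p10 && p11) ==> (4 < count id [:: p0; p1; p2; p3; p4; p5; p6; p7; p8; p9; p10; p11]) ==> false.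
Proof.
move=> p0 p1 p2 p3 p4 p5 p6 p7 p8 p9 p10 p11.
have := @allbP 12 (fun s => if s is [:: p0; p1; p2; p3; p4; p5; p6; p7; p8; p9; p10; p11] then ~~ (p0 && p6) ==> ~~ (p0 && p7) ==> ~~ (p0 && p8) ==> ~~ (p0 && p9) ==> ~~ (p1 && p4) ==> ~~ (p1 && p8) ==> ~~ (p1 && p9) ==> ~~ (p1 && p11) ==> ~~ (p2 && p4) ==> ~~ (p2 && p5) ==> ~~ (p2 && p8) ==> ~~ (p2 && p10) ==> ~~ (p3 && p5) ==> ~~ (p3 && p6) ==> ~~ (p3 && p8) ==> ~~ (p3 && p11) ==> ~~ (p4 && p6) ==> ~~ (p4 && p7) ==> ~~ (p5 && p7) ==> ~~ (p5 && p9) ==> ~~ (p6 && p10) ==> ~~ (p7 && p11) ==> ~~ (p10 && p11) ==> (4 < count id [:: p0; p1; p2; p3; p4; p5; p6; p7; p8; p9; p10; p11]) ==> false else true) (erefl true) [:: p0; p1; p2; p3; p4; p5; p6; p7; p8; p9; p10; p11] erefl.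
by [].
Qed.

Lemma taut4 : forall p0 p1 p2 p3 p4 p5 p6 p7 p8 p9 p10 p11 : bool, ~~ (p0 && p6) ==> ~~ (p0 && p7) ==> ~~ (p0 && p8) ==> ~~ (p0 && p9) ==> ~~ (p1 && p4) ==> ~~ (p1 && p8) ==> ~~ (p1 && p9) ==> ~~ (p2 && p4) ==> ~~ (p2 && p5) ==> ~~ (p2 && p8) ==> ~~ (p2 && p10) ==> ~~ (p3 && p5) ==> ~~ (p3 && p6) ==> ~~ (p3 && p8) ==> ~~ (p3 && p11) ==> ~~ (p4 && p6) ==> ~~ (p4 && p7) ==> ~~ (p5 && p7) ==> ~~ (p5 && p9) ==> ~~ (p6 && p10) ==> ~~ (p7 && p11) ==> ~~ (p9 && p11) ==> ~~ (p10 && p11) ==> (4 < count id [:: p0; p1; p2; p3; p4; p5; p6; p7; p8; p9; p10; p11]) ==> false.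
Proof.
move=> p0 p1 p2 p3 p4 p5 p6 p7 p8 p9 p10 p11.
have := @allbP 12 (fun s => if s is [:: p0; p1; p2; p3; p4; p5; p6; p7; p8; p9; p10; p11] then ~~ (p0 && p6) ==> ~~ (p0 && p7) ==> ~~ (p0 && p8) ==> ~~ (p0 && p9) ==> ~~ (p1 && p4) ==> ~~ (p1 && p8) ==> ~~ (p1 && p9) ==> ~~ (p2 && p4) ==> ~~ (p2 && p5) ==> ~~ (p2 && p8) ==> ~~ (p2 && p10) ==> ~~ (p3 && p5) ==> ~~ (p3 && p6) ==> ~~ (p3 && p8) ==> ~~ (p3 && p11) ==> ~~ (p4 && p6) ==> ~~ (p4 && p7) ==> ~~ (p5 && p7) ==> ~~ (p5 && p9) ==> ~~ (p6 && p10) ==> ~~ (p7 && p11) ==> ~~ (p9 && p11) ==> ~~ (p10 && p11) ==> (4 < count id [:: p0; p1; p2; p3; p4; p5; p6; p7; p8; p9; p10; p11]) ==> false else true) (erefl true) [:: p0; p1; p2; p3; p4; p5; p6; p7; p8; p9; p10; p11] erefl.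
by [].
Qed.

Lemma taut5 : forall p0 p1 p2 p3 p4 p5 p6 p7 p8 : bool, ~~ (p0 && p4) ==> ~~ (p0 && p5) ==> ~~ (p0 && p6) ==> ~~ (p1 && p6) ==> ~~ (p1 && p8) ==> ~~ (p2 && p3) ==> ~~ (p2 && p4) ==> ~~ (p2 && p8) ==> ~~ (p3 && p5) ==> ~~ (p3 && p6) ==> ~~ (p4 && p7) ==> ~~ (p5 && p8) ==> ~~ [&& p0, p1, p2 & p7] ==> ~~ [&& p0, p1, p3 & p7] ==> ~~ [&& p0, p3, p7 & p8] ==> ~~ [&& p1, p2, p5 & p7] ==> ~~ [&& p2, p5, p6 & p7] ==> (3 < count id [:: p0; p1; p2; p3; p4; p5; p6; p7; p8]) ==> false.
Proof.
move=> p0 p1 p2 p3 p4 p5 p6 p7 p8.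
have := @allbP 9 (fun s => if s is [:: p0; p1; p2; p3; p4; p5; p6; p7; p8] then ~~ (p0 && p4) ==> ~~ (p0 && p5) ==> ~~ (p0 && p6) ==> ~~ (p1 && p6) ==> ~~ (p1 && p8) ==> ~~ (p2 && p3) ==> ~~ (p2 && p4) ==> ~~ (p2 && p8) ==> ~~ (p3 && p5) ==> ~~ (p3 && p6) ==> ~~ (p4 && p7) ==> ~~ (p5 && p8) ==> ~~ [&& p0, p1, p2 & p7] ==> ~~ [&& p0, p1, p3 & p7] ==> ~~ [&& p0, p3, p7 & p8] ==> ~~ [&& p1, p2, p5 & p7] ==> ~~ [&& p2, p5, p6 & p7] ==> (3 < count id [:: p0; p1; p2; p3; p4; p5; p6; p7; p8]) ==> false else true) (erefl true) [:: p0; p1; p2; p3; p4; p5; p6; p7; p8] erefl.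
by [].
Qed.

Theorem mainTheorem15 (T : finType) (e : rel T) (a b : 'Z_5 -> T) (c : T) :
  in_frakD4 e -> MG_subgraph e a b c ->
  exists i : 'Z_5, i \in [:: 1%R; 2%R; 3%R] /\ reliable e a b i.
Proof.
move=> [[sy irr] [[tf mx] D]] [ai bi hab hc Hall].
have nbL := @nb _ e tf.
have D3 := @D4use _ e D.
have H0 := Hall 0%R.
have zp0 : (0 + 2 = 2 :> 'Z_5)%R by apply/val_inj.
have zm0 : (0 - 2 = 3 :> 'Z_5)%R by apply/val_inj.
rewrite zp0 zm0 in H0.
case: H0 => E_a0_c E_a0_b2 E_a0_b3 E_b0_b2.
have H1 := Hall 1%R.
have zp1 : (1 + 2 = 3 :> 'Z_5)%R by apply/val_inj.
have zm1 : (1 - 2 = 4 :> 'Z_5)%R by apply/val_inj.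
rewrite zp1 zm1 in H1.
case: H1 => E_a1_c E_a1_b3 E_a1_b4 E_b1_b3.
have H2 := Hall 2%R.
have zp2 : (2 + 2 = 4 :> 'Z_5)%R by apply/val_inj.
have zm2 : (2 - 2 = 0 :> 'Z_5)%R by apply/val_inj.
rewrite zp2 zm2 in H2.
case: H2 => E_a2_c E_a2_b4 E_a2_b0 E_b2_b4.
have H3 := Hall 3%R.
have zp3 : (3 + 2 = 0 :> 'Z_5)%R by apply/val_inj.
have zm3 : (3 - 2 = 1 :> 'Z_5)%R by apply/val_inj.
rewrite zp3 zm3 in H3.
case: H3 => E_a3_c E_a3_b0 E_a3_b1 E_b3_b0.
have H4 := Hall 4%R.
have zp4 : (4 + 2 = 1 :> 'Z_5)%R by apply/val_inj.
have zm4 : (4 - 2 = 2 :> 'Z_5)%R by apply/val_inj.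
rewrite zp4 zm4 in H4.
case: H4 => E_a4_c E_a4_b1 E_a4_b2 E_b4_b1.
case: (boolP [exists v, [&& e v (a 0%R), e v (a 2%R) & e v (b 1%R)]]) => [/existsP [v1 /and3P [E_v1_a0 E_v1_a2 E_v1_b1]] | NR1]; last first.
  exists 1%R; split; first by [].
  have zq1 : (1 - 1 = 0 :> 'Z_5)%R by apply/val_inj.
  have zq2 : (1 + 1 = 2 :> 'Z_5)%R by apply/val_inj.
  rewrite /reliable zq1 zq2.
  by move=> [v hv]; move/existsP: NR1; apply; exists v.
case: (boolP [exists v, [&& e v (a 1%R), e v (a 3%R) & e v (b 2%R)]]) => [/existsP [v2 /and3P [E_v2_a1 E_v2_a3 E_v2_b2]] | NR2]; last first.
  exists 2%R; split; first by [].
  have zq1 : (2 - 1 = 1 :> 'Z_5)%R by apply/val_inj.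
  have zq2 : (2 + 1 = 3 :> 'Z_5)%R by apply/val_inj.
  rewrite /reliable zq1 zq2.
  by move=> [v hv]; move/existsP: NR2; apply; exists v.
case: (boolP [exists v, [&& e v (a 2%R), e v (a 4%R) & e v (b 3%R)]]) => [/existsP [v3 /and3P [E_v3_a2 E_v3_a4 E_v3_b3]] | NR3]; last first.
  exists 3%R; split; first by [].
  have zq1 : (3 - 1 = 2 :> 'Z_5)%R by apply/val_inj.
  have zq2 : (3 + 1 = 4 :> 'Z_5)%R by apply/val_inj.
  rewrite /reliable zq1 zq2.
  by move=> [v hv]; move/existsP: NR3; apply; exists v.
have E_b2_a0 : e (b 2%R) (a 0%R) by rewrite sy.
have E_b3_a0 : e (b 3%R) (a 0%R) by rewrite sy.
have E_c_a0 : e c (a 0%R) by rewrite sy.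
have E_b3_a1 : e (b 3%R) (a 1%R) by rewrite sy.
have E_b4_a1 : e (b 4%R) (a 1%R) by rewrite sy.
have E_c_a1 : e c (a 1%R) by rewrite sy.
have E_b0_a2 : e (b 0%R) (a 2%R) by rewrite sy.
have E_b4_a2 : e (b 4%R) (a 2%R) by rewrite sy.
have E_c_a2 : e c (a 2%R) by rewrite sy.
have E_b0_a3 : e (b 0%R) (a 3%R) by rewrite sy.
have E_b1_a3 : e (b 1%R) (a 3%R) by rewrite sy.
have E_c_a3 : e c (a 3%R) by rewrite sy.
have E_b1_a4 : e (b 1%R) (a 4%R) by rewrite sy.
have E_b2_a4 : e (b 2%R) (a 4%R) by rewrite sy.
have E_c_a4 : e c (a 4%R) by rewrite sy.
have E_b2_b0 : e (b 2%R) (b 0%R) by rewrite sy.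
have E_b3_b1 : e (b 3%R) (b 1%R) by rewrite sy.
have E_b4_b2 : e (b 4%R) (b 2%R) by rewrite sy.
have E_b0_b3 : e (b 0%R) (b 3%R) by rewrite sy.
have E_b1_b4 : e (b 1%R) (b 4%R) by rewrite sy.
have E_a0_v1 : e (a 0%R) v1 by rewrite sy.
have E_a2_v1 : e (a 2%R) v1 by rewrite sy.
have E_b1_v1 : e (b 1%R) v1 by rewrite sy.
have E_a1_v2 : e (a 1%R) v2 by rewrite sy.
have E_a3_v2 : e (a 3%R) v2 by rewrite sy.
have E_b2_v2 : e (b 2%R) v2 by rewrite sy.
have E_a2_v3 : e (a 2%R) v3 by rewrite sy.
have E_a4_v3 : e (a 4%R) v3 by rewrite sy.
have E_b3_v3 : e (b 3%R) v3 by rewrite sy.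
have [y Hy] := D3 3 isT [:: (a 0%R); (a 2%R); (a 4%R); (b 1%R); (b 2%R); (b 3%R); v1; v2; v3] erefl.
have N0 : ~~ [&& e (a 0%R) y, e (a 2%R) y, e (a 4%R) y & e v2 y].
  apply/negP => /and4P [E_a0_y E_a2_y E_a4_y E_v2_y].
  have E_y_a0 : e y (a 0%R) by rewrite sy.
  have E_y_a2 : e y (a 2%R) by rewrite sy.
  have E_y_a4 : e y (a 4%R) by rewrite sy.
  have E_y_v2 : e y v2 by rewrite sy.
  have [z Hz] := D3 4 isT [:: (a 0%R); (a 1%R); (a 2%R); (a 3%R); (b 0%R); (b 1%R); (b 2%R); (b 3%R); (b 4%R); c; v2; y] erefl.
  have T0 := nbL (a 0%R) (b 2%R) z E_a0_b2.
  have T1 := nbL (a 0%R) (b 3%R) z E_a0_b3.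
  have T2 := nbL (a 0%R) c z E_a0_c.
  have T3 := nbL (a 0%R) y z E_a0_y.
  have T4 := nbL (a 1%R) (b 3%R) z E_a1_b3.
  have T5 := nbL (a 1%R) (b 4%R) z E_a1_b4.
  have T6 := nbL (a 1%R) c z E_a1_c.
  have T7 := nbL (a 1%R) v2 z E_a1_v2.
  have T8 := nbL (a 2%R) (b 0%R) z E_a2_b0.
  have T9 := nbL (a 2%R) (b 4%R) z E_a2_b4.
  have T10 := nbL (a 2%R) c z E_a2_c.
  have T11 := nbL (a 2%R) y z E_a2_y.
  have T12 := nbL (a 3%R) (b 0%R) z E_a3_b0.
  have T13 := nbL (a 3%R) (b 1%R) z E_a3_b1.
  have T14 := nbL (a 3%R) c z E_a3_c.
  have T15 := nbL (a 3%R) v2 z E_a3_v2.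
  have T16 := nbL (b 0%R) (b 2%R) z E_b0_b2.
  have T17 := nbL (b 0%R) (b 3%R) z E_b0_b3.
  have T18 := nbL (b 1%R) (b 3%R) z E_b1_b3.
  have T19 := nbL (b 1%R) (b 4%R) z E_b1_b4.
  have T20 := nbL (b 2%R) (b 4%R) z E_b2_b4.
  have T21 := nbL (b 2%R) v2 z E_b2_v2.
  have T22 := nbL v2 y z E_v2_y.
  by move: (taut0 (e (a 0%R) z) (e (a 1%R) z) (e (a 2%R) z) (e (a 3%R) z) (e (b 0%R) z) (e (b 1%R) z) (e (b 2%R) z) (e (b 3%R) z) (e (b 4%R) z) (e c z) (e v2 z) (e y z)) => /implyP/(_ T0)/implyP/(_ T1)/implyP/(_ T2)/implyP/(_ T3)/implyP/(_ T4)/implyP/(_ T5)/implyP/(_ T6)/implyP/(_ T7)/implyP/(_ T8)/implyP/(_ T9)/implyP/(_ T10)/implyP/(_ T11)/implyP/(_ T12)/implyP/(_ T13)/implyP/(_ T14)/implyP/(_ T15)/implyP/(_ T16)/implyP/(_ T17)/implyP/(_ T18)/implyP/(_ T19)/implyP/(_ T20)/implyP/(_ T21)/implyP/(_ T22)/implyP/(_ Hz).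
have N1 : ~~ [&& e (a 0%R) y, e (a 2%R) y, e (b 1%R) y & e v2 y].
  apply/negP => /and4P [E_a0_y E_a2_y E_b1_y E_v2_y].
  have E_y_a0 : e y (a 0%R) by rewrite sy.
  have E_y_a2 : e y (a 2%R) by rewrite sy.
  have E_y_b1 : e y (b 1%R) by rewrite sy.
  have E_y_v2 : e y v2 by rewrite sy.
  have [z Hz] := D3 4 isT [:: (a 0%R); (a 1%R); (a 2%R); (a 3%R); (b 0%R); (b 1%R); (b 2%R); (b 3%R); (b 4%R); c; v2; y] erefl.
  have T0 := nbL (a 0%R) (b 2%R) z E_a0_b2.
  have T1 := nbL (a 0%R) (b 3%R) z E_a0_b3.
  have T2 := nbL (a 0%R) c z E_a0_c.
  have T3 := nbL (a 0%R) y z E_a0_y.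
  have T4 := nbL (a 1%R) (b 3%R) z E_a1_b3.
  have T5 := nbL (a 1%R) (b 4%R) z E_a1_b4.
  have T6 := nbL (a 1%R) c z E_a1_c.
  have T7 := nbL (a 1%R) v2 z E_a1_v2.
  have T8 := nbL (a 2%R) (b 0%R) z E_a2_b0.
  have T9 := nbL (a 2%R) (b 4%R) z E_a2_b4.
  have T10 := nbL (a 2%R) c z E_a2_c.
  have T11 := nbL (a 2%R) y z E_a2_y.
  have T12 := nbL (a 3%R) (b 0%R) z E_a3_b0.
  have T13 := nbL (a 3%R) (b 1%R) z E_a3_b1.
  have T14 := nbL (a 3%R) c z E_a3_c.
  have T15 := nbL (a 3%R) v2 z E_a3_v2.
  have T16 := nbL (b 0%R) (b 2%R) z E_b0_b2.
  have T17 := nbL (b 0%R) (b 3%R) z E_b0_b3.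
  have T18 := nbL (b 1%R) (b 3%R) z E_b1_b3.
  have T19 := nbL (b 1%R) (b 4%R) z E_b1_b4.
  have T20 := nbL (b 1%R) y z E_b1_y.
  have T21 := nbL (b 2%R) (b 4%R) z E_b2_b4.
  have T22 := nbL (b 2%R) v2 z E_b2_v2.
  have T23 := nbL v2 y z E_v2_y.
  by move: (taut1 (e (a 0%R) z) (e (a 1%R) z) (e (a 2%R) z) (e (a 3%R) z) (e (b 0%R) z) (e (b 1%R) z) (e (b 2%R) z) (e (b 3%R) z) (e (b 4%R) z) (e c z) (e v2 z) (e y z)) => /implyP/(_ T0)/implyP/(_ T1)/implyP/(_ T2)/implyP/(_ T3)/implyP/(_ T4)/implyP/(_ T5)/implyP/(_ T6)/implyP/(_ T7)/implyP/(_ T8)/implyP/(_ T9)/implyP/(_ T10)/implyP/(_ T11)/implyP/(_ T12)/implyP/(_ T13)/implyP/(_ T14)/implyP/(_ T15)/implyP/(_ T16)/implyP/(_ T17)/implyP/(_ T18)/implyP/(_ T19)/implyP/(_ T20)/implyP/(_ T21)/implyP/(_ T22)/implyP/(_ T23)/implyP/(_ Hz).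
have N2 : ~~ [&& e (a 0%R) y, e (b 1%R) y, e v2 y & e v3 y].
  apply/negP => /and4P [E_a0_y E_b1_y E_v2_y E_v3_y].
  have E_y_a0 : e y (a 0%R) by rewrite sy.
  have E_y_b1 : e y (b 1%R) by rewrite sy.
  have E_y_v2 : e y v2 by rewrite sy.
  have E_y_v3 : e y v3 by rewrite sy.
  have [z Hz] := D3 4 isT [:: (a 0%R); (a 1%R); (a 2%R); (a 4%R); (b 1%R); (b 2%R); (b 3%R); (b 4%R); c; v2; v3; y] erefl.
  have T0 := nbL (a 0%R) (b 2%R) z E_a0_b2.
  have T1 := nbL (a 0%R) (b 3%R) z E_a0_b3.
  have T2 := nbL (a 0%R) c z E_a0_c.
  have T3 := nbL (a 0%R) y z E_a0_y.
  have T4 := nbL (a 1%R) (b 3%R) z E_a1_b3.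
  have T5 := nbL (a 1%R) (b 4%R) z E_a1_b4.
  have T6 := nbL (a 1%R) c z E_a1_c.
  have T7 := nbL (a 1%R) v2 z E_a1_v2.
  have T8 := nbL (a 2%R) (b 4%R) z E_a2_b4.
  have T9 := nbL (a 2%R) c z E_a2_c.
  have T10 := nbL (a 2%R) v3 z E_a2_v3.
  have T11 := nbL (a 4%R) (b 1%R) z E_a4_b1.
  have T12 := nbL (a 4%R) (b 2%R) z E_a4_b2.
  have T13 := nbL (a 4%R) c z E_a4_c.
  have T14 := nbL (a 4%R) v3 z E_a4_v3.
  have T15 := nbL (b 1%R) (b 3%R) z E_b1_b3.
  have T16 := nbL (b 1%R) (b 4%R) z E_b1_b4.
  have T17 := nbL (b 1%R) y z E_b1_y.
  have T18 := nbL (b 2%R) (b 4%R) z E_b2_b4.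
  have T19 := nbL (b 2%R) v2 z E_b2_v2.
  have T20 := nbL (b 3%R) v3 z E_b3_v3.
  have T21 := nbL v2 y z E_v2_y.
  have T22 := nbL v3 y z E_v3_y.
  by move: (taut2 (e (a 0%R) z) (e (a 1%R) z) (e (a 2%R) z) (e (a 4%R) z) (e (b 1%R) z) (e (b 2%R) z) (e (b 3%R) z) (e (b 4%R) z) (e c z) (e v2 z) (e v3 z) (e y z)) => /implyP/(_ T0)/implyP/(_ T1)/implyP/(_ T2)/implyP/(_ T3)/implyP/(_ T4)/implyP/(_ T5)/implyP/(_ T6)/implyP/(_ T7)/implyP/(_ T8)/implyP/(_ T9)/implyP/(_ T10)/implyP/(_ T11)/implyP/(_ T12)/implyP/(_ T13)/implyP/(_ T14)/implyP/(_ T15)/implyP/(_ T16)/implyP/(_ T17)/implyP/(_ T18)/implyP/(_ T19)/implyP/(_ T20)/implyP/(_ T21)/implyP/(_ T22)/implyP/(_ Hz).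
have N3 : ~~ [&& e (a 2%R) y, e (a 4%R) y, e (b 3%R) y & e v2 y].
  apply/negP => /and4P [E_a2_y E_a4_y E_b3_y E_v2_y].
  have E_y_a2 : e y (a 2%R) by rewrite sy.
  have E_y_a4 : e y (a 4%R) by rewrite sy.
  have E_y_b3 : e y (b 3%R) by rewrite sy.
  have E_y_v2 : e y v2 by rewrite sy.
  have [z Hz] := D3 4 isT [:: (a 0%R); (a 2%R); (a 3%R); (a 4%R); (b 0%R); (b 1%R); (b 2%R); (b 3%R); c; v1; v2; y] erefl.
  have T0 := nbL (a 0%R) (b 2%R) z E_a0_b2.
  have T1 := nbL (a 0%R) (b 3%R) z E_a0_b3.
  have T2 := nbL (a 0%R) c z E_a0_c.
  have T3 := nbL (a 0%R) v1 z E_a0_v1.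
  have T4 := nbL (a 2%R) (b 0%R) z E_a2_b0.
  have T5 := nbL (a 2%R) c z E_a2_c.
  have T6 := nbL (a 2%R) v1 z E_a2_v1.
  have T7 := nbL (a 2%R) y z E_a2_y.
  have T8 := nbL (a 3%R) (b 0%R) z E_a3_b0.
  have T9 := nbL (a 3%R) (b 1%R) z E_a3_b1.
  have T10 := nbL (a 3%R) c z E_a3_c.
  have T11 := nbL (a 3%R) v2 z E_a3_v2.
  have T12 := nbL (a 4%R) (b 1%R) z E_a4_b1.
  have T13 := nbL (a 4%R) (b 2%R) z E_a4_b2.
  have T14 := nbL (a 4%R) c z E_a4_c.
  have T15 := nbL (a 4%R) y z E_a4_y.
  have T16 := nbL (b 0%R) (b 2%R) z E_b0_b2.
  have T17 := nbL (b 0%R) (b 3%R) z E_b0_b3.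
  have T18 := nbL (b 1%R) (b 3%R) z E_b1_b3.
  have T19 := nbL (b 1%R) v1 z E_b1_v1.
  have T20 := nbL (b 2%R) v2 z E_b2_v2.
  have T21 := nbL (b 3%R) y z E_b3_y.
  have T22 := nbL v2 y z E_v2_y.
  by move: (taut3 (e (a 0%R) z) (e (a 2%R) z) (e (a 3%R) z) (e (a 4%R) z) (e (b 0%R) z) (e (b 1%R) z) (e (b 2%R) z) (e (b 3%R) z) (e c z) (e v1 z) (e v2 z) (e y z)) => /implyP/(_ T0)/implyP/(_ T1)/implyP/(_ T2)/implyP/(_ T3)/implyP/(_ T4)/implyP/(_ T5)/implyP/(_ T6)/implyP/(_ T7)/implyP/(_ T8)/implyP/(_ T9)/implyP/(_ T10)/implyP/(_ T11)/implyP/(_ T12)/implyP/(_ T13)/implyP/(_ T14)/implyP/(_ T15)/implyP/(_ T16)/implyP/(_ T17)/implyP/(_ T18)/implyP/(_ T19)/implyP/(_ T20)/implyP/(_ T21)/implyP/(_ T22)/implyP/(_ Hz).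
have N4 : ~~ [&& e (a 4%R) y, e (b 3%R) y, e v1 y & e v2 y].
  apply/negP => /and4P [E_a4_y E_b3_y E_v1_y E_v2_y].
  have E_y_a4 : e y (a 4%R) by rewrite sy.
  have E_y_b3 : e y (b 3%R) by rewrite sy.
  have E_y_v1 : e y v1 by rewrite sy.
  have E_y_v2 : e y v2 by rewrite sy.
  have [z Hz] := D3 4 isT [:: (a 0%R); (a 2%R); (a 3%R); (a 4%R); (b 0%R); (b 1%R); (b 2%R); (b 3%R); c; v1; v2; y] erefl.
  have T0 := nbL (a 0%R) (b 2%R) z E_a0_b2.
  have T1 := nbL (a 0%R) (b 3%R) z E_a0_b3.
  have T2 := nbL (a 0%R) c z E_a0_c.
  have T3 := nbL (a 0%R) v1 z E_a0_v1.
  have T4 := nbL (a 2%R) (b 0%R) z E_a2_b0.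
  have T5 := nbL (a 2%R) c z E_a2_c.
  have T6 := nbL (a 2%R) v1 z E_a2_v1.
  have T7 := nbL (a 3%R) (b 0%R) z E_a3_b0.
  have T8 := nbL (a 3%R) (b 1%R) z E_a3_b1.
  have T9 := nbL (a 3%R) c z E_a3_c.
  have T10 := nbL (a 3%R) v2 z E_a3_v2.
  have T11 := nbL (a 4%R) (b 1%R) z E_a4_b1.
  have T12 := nbL (a 4%R) (b 2%R) z E_a4_b2.
  have T13 := nbL (a 4%R) c z E_a4_c.
  have T14 := nbL (a 4%R) y z E_a4_y.
  have T15 := nbL (b 0%R) (b 2%R) z E_b0_b2.
  have T16 := nbL (b 0%R) (b 3%R) z E_b0_b3.
  have T17 := nbL (b 1%R) (b 3%R) z E_b1_b3.
  have T18 := nbL (b 1%R) v1 z E_b1_v1.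
  have T19 := nbL (b 2%R) v2 z E_b2_v2.
  have T20 := nbL (b 3%R) y z E_b3_y.
  have T21 := nbL v1 y z E_v1_y.
  have T22 := nbL v2 y z E_v2_y.
  by move: (taut4 (e (a 0%R) z) (e (a 2%R) z) (e (a 3%R) z) (e (a 4%R) z) (e (b 0%R) z) (e (b 1%R) z) (e (b 2%R) z) (e (b 3%R) z) (e c z) (e v1 z) (e v2 z) (e y z)) => /implyP/(_ T0)/implyP/(_ T1)/implyP/(_ T2)/implyP/(_ T3)/implyP/(_ T4)/implyP/(_ T5)/implyP/(_ T6)/implyP/(_ T7)/implyP/(_ T8)/implyP/(_ T9)/implyP/(_ T10)/implyP/(_ T11)/implyP/(_ T12)/implyP/(_ T13)/implyP/(_ T14)/implyP/(_ T15)/implyP/(_ T16)/implyP/(_ T17)/implyP/(_ T18)/implyP/(_ T19)/implyP/(_ T20)/implyP/(_ T21)/implyP/(_ T22)/implyP/(_ Hz).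
have S0 := nbL (a 0%R) (b 2%R) y E_a0_b2.
have S1 := nbL (a 0%R) (b 3%R) y E_a0_b3.
have S2 := nbL (a 0%R) v1 y E_a0_v1.
have S3 := nbL (a 2%R) v1 y E_a2_v1.
have S4 := nbL (a 2%R) v3 y E_a2_v3.
have S5 := nbL (a 4%R) (b 1%R) y E_a4_b1.
have S6 := nbL (a 4%R) (b 2%R) y E_a4_b2.
have S7 := nbL (a 4%R) v3 y E_a4_v3.
have S8 := nbL (b 1%R) (b 3%R) y E_b1_b3.
have S9 := nbL (b 1%R) v1 y E_b1_v1.
have S10 := nbL (b 2%R) v2 y E_b2_v2.
have S11 := nbL (b 3%R) v3 y E_b3_v3.
by move: (taut5 (e (a 0%R) y) (e (a 2%R) y) (e (a 4%R) y) (e (b 1%R) y) (e (b 2%R) y) (e (b 3%R) y) (e v1 y) (e v2 y) (e v3 y)) => /implyP/(_ S0)/implyP/(_ S1)/implyP/(_ S2)/implyP/(_ S3)/implyP/(_ S4)/implyP/(_ S5)/implyP/(_ S6)/implyP/(_ S7)/implyP/(_ S8)/implyP/(_ S9)/implyP/(_ S10)/implyP/(_ S11)/implyP/(_ N0)/implyP/(_ N1)/implyP/(_ N2)/implyP/(_ N3)/implyP/(_ N4)/implyP/(_ Hy).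
Qed.
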